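(* Let $R$ be a generalized Rickart $*$-ring. Then the following are equivalent: (1) $R$ satisfies the parallelogram law; (2) whenever projections $e,f$ are in position $p'$, $e\sim f$.
   Context: A $*$-ring is an associative ring $R$ with an involution $x\mapsto x^*$ (additive, $(xy)^*=y^*x^*$, $x^{**}=x$). A projection is an element $e$ with $e=e^*=e^2$; projections are partially ordered by $e\le f$ iff $e=ef$, and $\wedge,\vee$ denote infimum and supremum in this poset. $e\sim f$ means there is $w\in R$ with $w^*w=e$, $ww^*=f$. For $a\in R$, $r(a)=\{b: ab=0\}$. $R$ is a generalized Rickart $*$-ring if for every $x$ there exist $n\ge1$ and a projection $g$ with $r(x^n)=gR$; such a ring has identity $1$. $R$ satisfies the parallelogram law if $e-e\wedge f\sim e\vee f-f$ for every pair of projections $e,f$ for which $e\wedge f$ and $e\vee f$ exist. Projections $e,f$ are in position $p'$ if $e\wedge(1-f)=0$ and $e\vee(1-f)=1$. *)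

(* Defs.v *)
From mathcomp Require Import all_boot all_algebra.
Set Implicit Arguments. Unset Strict Implicit. Unset Printing Implicit Defensive.
Import GRing.Theory.
Local Open Scope ring_scope.

Record is_involution (R : pzRingType) (star : R -> R) : Prop := {
  star_add : forall x y, star (x + y) = star x + star y;
  star_mul : forall x y, star (x * y) = star y * star x;
  star_invol : forall x, star (star x) = x }.

Section StarRing.
Variables (R : pzRingType) (star : R -> R).

Definition is_projection (e : R) : Prop := star e = e /\ e * e = e.

Definition proj_le (e f : R) : Prop := e = e * f.

Definition is_proj_meet (e f m : R) : Prop :=
  [/\ is_projection m, proj_le m e, proj_le m f &
      forall h, is_projection h -> proj_le h e -> proj_le h f -> proj_le h m].

Definition is_proj_join (e f j : R) : Prop :=
  [/\ is_projection j, proj_le e j, proj_le f j &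
      forall h, is_projection h -> proj_le e h -> proj_le f h -> proj_le j h].

Definition star_equiv (e f : R) : Prop :=
  exists w : R, star w * w = e /\ w * star w = f.

(* r(a) = g R  written pointwise *)
Definition right_annihilator_is (a g : R) : Prop :=
  forall b, a * b = 0 <-> exists c, b = g * c.

Definition generalized_rickart : Prop :=
  forall x : R, exists n : nat, exists g : R,
    (1 <= n)%N /\ is_projection g /\ right_annihilator_is (x ^+ n) g.

Definition parallelogram_law : Prop :=
  forall e f m j, is_projection e -> is_projection f ->
    is_proj_meet e f m -> is_proj_join e f j -> star_equiv (e - m) (j - f).

Definition position_p' (e f : R) : Prop :=
  is_proj_meet e (1 - f) 0 /\ is_proj_join e (1 - f) 1.

End StarRing.

(* Main.v *)
Require Import Defs.
From mathcomp Require Import all_boot all_algebra.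
Local Open Scope ring_scope.
Import GRing.Theory.
Set Implicit Arguments.

Section Aux.
Variables (R : pzRingType) (star : R -> R) (I : is_involution star).

Lemma st0 : star 0 = 0.
Proof.
have h := star_add I 0 0. rewrite addr0 in h.
by apply: (addrI (star 0)); rewrite addr0 -h.
Qed.

Lemma stN x : star (- x) = - star x.
Proof.
have h := star_add I x (- x). rewrite subrr st0 in h.
by apply: (addrI (star x)); rewrite -h subrr.
Qed.

Lemma stB x y : star (x - y) = star x - star y.
Proof. by rewrite star_add // stN. Qed.

Lemma st1 : star 1 = 1.
Proof.
have h := star_mul I (star 1) 1.
by rewrite mulr1 star_invol // mulr1 in h.
Qed.

Lemma le_sym h e : is_projection star h -> is_projection star e ->
  h = h * e -> h = e * h.
Proof.
move=> [sh _] [se _] H.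
have: star h = star (h * e) by rewrite -H.
by rewrite star_mul // sh se.
Qed.

Lemma projB e m : is_projection star e -> is_projection star m ->
  m = m * e -> is_projection star (e - m).
Proof.
move=> pe pm H; have H2 := le_sym pm pe H.
case: pe => se ee; case: pm => sm mm.
split; first by rewrite stB se sm.
by rewrite mulrBl !mulrBr ee mm -H -H2 subrr subr0.
Qed.

Lemma projC f : is_projection star f -> is_projection star (1 - f).
Proof.
case=> sf ff; split; first by rewrite stB st1 sf.
rewrite mulrBl !mulrBr !mul1r !mulr1 ff subrr subr0 //.
Qed.

Lemma canc3 (a b c : R) : a = a - b + c -> b = c.
Proof.
move=> E; apply/eqP; rewrite eq_sym -subr_eq0.
have : a - b + c - a = 0 by rewrite -E subrr.
by rewrite addrAC (addrAC a) subrr add0r addrC => ->.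
Qed.

Lemma proj0 : is_projection star 0.
Proof. by split; [exact: st0 | rewrite mulr0]. Qed.

Lemma proj1 : is_projection star 1.
Proof. by split; [exact: st1 | rewrite mulr1]. Qed.

End Aux.

Theorem mainTheorem17 (R : pzRingType) (star : R -> R) :
  is_involution star -> generalized_rickart star ->
  (parallelogram_law star <->
   (forall e f : R, is_projection star e -> is_projection star f ->
      position_p' star e f -> star_equiv star e f)).
Proof.
move=> I _; split.
- move=> PL e f pe pf [Hm Hj].
  have := PL e (1 - f) 0 1 pe (projC I pf) Hm Hj.
  by rewrite subr0 opprB addrC subrK.
- move=> H e f m j pe pf [pm me mf mG] [pj ej fj jG].
  have em := le_sym I pm pe me. have fm := le_sym I pm pf mf.
  have je := le_sym I pe pj ej. have jf := le_sym I pf pj fj.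
  have pem := projB I pe pm me. have pjf := projB I pj pf fj.
  case: (pe) => se ee; case: (pf) => sf ff; case: (pm) => sm mm; case: (pj) => sj jj.
  apply: H => //; split.
  + split; [exact: (proj0 I) | by rewrite /proj_le mul0r | by rewrite /proj_le mul0r | ].
    move=> h ph; rewrite /proj_le => H1 H2; rewrite mulr0.
    have h1 : h = h * e - h * m by rewrite {1}H1 mulrBr.
    have hm : h * m = 0.
      have : h * e = h * e - h * m.
        by rewrite {1}h1 mulrBl -!mulrA ee -me.
      by move/eqP; rewrite -subr_eq0 opprB addrC subrK => /eqP.
    rewrite hm subr0 in h1.
    have hj : h = h * j by rewrite {1}h1 ej mulrA -h1.
    have hf : h = h * f.
      by rewrite {1}H2 !mulrBr mulr1 opprB addrC -hj subrK.
    by rewrite (mG h ph h1 hf) hm.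
  + split; [exact: (proj1 I) | by rewrite /proj_le mulr1 | by rewrite /proj_le mulr1 | ].
    move=> h ph; rewrite /proj_le => H1 H2; rewrite mul1r.
    case: (ph) => sh hh.
    have fh : f = f * h.
      have : f = f * (1 - (j - f)) by rewrite !mulrBr mulr1 ff -fj subrr subr0.
      by move=> E; rewrite {2}E -mulrA -H2 -E.
    have hf := le_sym I pf ph fh.
    have mh : m = m * h by rewrite {1}mf fh mulrA -mf.
    have eh : e = e * h.
      have : e = (e - m) + m by rewrite subrK.
      by move=> E; rewrite {2}E mulrDl -H1 -mh -E.
    have Hs := le_sym I (projC I pjf) ph H2.
    have hjc : h * j = j * h.
      move: Hs; rewrite {1}H2 !mulrBl !mulrBr mul1r mulr1 -fh -hf.
      by move/addrI/oppr_inj/addIr.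
    have pk : is_projection star (h * j).
      split; first by rewrite star_mul // sj sh.
      by rewrite mulrA -(mulrA h j h) -hjc mulrA hh -mulrA jj.
    have ek : e = e * (h * j) by rewrite mulrA -eh.
    have fk : f = f * (h * j) by rewrite mulrA -fh.
    have jk := jG _ pk ek fk.
    have jh : j * h = j.
      by rewrite {2}jk mulrA -hjc -mulrA jj hjc.
    move: H2; rewrite !mulrBl mul1r -fh jh.
    by move/addIr.
Qed.
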